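(* (SEM-ME) Let $M$ be a canonical linear SEM-ME satisfying SEM-ME faithfulness part (a). Then every model in the AOG equivalence class of $M$ satisfies SEM-ME faithfulness part (a), and every canonical SEM-ME whose mixing matrix equals $\mathbf W^{ME}(M)$ up to permutation and nonzero scaling of columns and which satisfies part (a) belongs to the AOG equivalence class of $M$. Hence, under separability and part (a), $M$ is identifiable exactly up to its AOG equivalence class. (SEM-UR) The analogous statement holds for a linear SEM-UR satisfying SEM-UR faithfulness part (a) and its AOG equivalence class.
   Context: Linear SEM-ME (canonical form): underlying variables $V_1,\dots,V_p$ partitioned into unobserved $\mathcal Z$ and observed $\mathcal Y$, $V_i=\sum_{V_j\in Pa(V_i)}c_{ij}V_j+N_{V_i}$ over a DAG (edge $V_j\to V_i$ of weight $c_{ij}$ iff $c_{ij}\ne0$), measurements $U_i=Z_i+N_{U_i}$, independent noises. A u-leaf node is a $Z$-variable with no children; all others are nu-leaf nodes; in canonical form u-leaf nodes have zero noise and nu-leaf nodes nondegenerate noise. A model is specified by its weighted DAG on the underlying variables and its set of u-leaf nodes. The mixing matrix $\mathbf W^{ME}$ has rows indexed by underlying variables, columns by noise terms $N_{V'}$ of nu-leaf nodes, $(V,N_{V'})$ entry = total causal effect of $V'$ on $V$ (sum over directed paths of products of weights; $1$ if $V=V'$). Linear SEM-UR: $H=N_H$, $X=\mathbf BH+\mathbf AX+N_X$ with $\mathbf A$ strictly lower triangular, independent noises; diagram: edges $H_i\to X_j$ iff $b_{ji}\ne0$, $X_k\to X_j$ iff $a_{jk}\ne0$; mixing matrix $\mathbf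 W^{UR}=[(\mathbf I-\mathbf A)^{-1}\mathbf B\;\;(\mathbf I-\mathbf A)^{-1}]$, rows indexed by observed variables, columns by noise terms. Separability: the mixing matrix can be recovered from the distribution of the observed variables up to permutation and nonzero scaling of its columns. Faithfulness part (a): SEM-ME: the total causal effect of any underlying variable on any of its descendants is nonzero. SEM-UR: the total causal effect of any observed or latent variable on any of its descendants is nonzero. Ancestral ordered grouping (AOG). SEM-ME: each nu-leaf node in its own group; each u-leaf node $Z_j$ goes into the group of a parent $V_i$ if $Z_j$ has no other parents or all its other parents are ancestors of $V_i$, else into a singleton group. SEM-UR: each observed variable in its own group; each latent $H_j$ goes into the group of a child $X_i$ if $H_j$ has no other children or all its other children are descendants of $X_i$, else into a singleton group. AOG equivalence class of $M$: the set of models (canonical SEM-ME on the same underlying variables; resp. SEM-UR on the same observed variables with the same number of latent variables) whose mixing matrix equals that of $M$ up to permutation and nonzero scaling of columns and whose AOG partition coincides with that of $M$ (for SEM-UR, up to relabeling latent variables). *)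

(* Defs.v *)
From HB Require Import structures.
From mathcomp Require Import all_boot all_order all_algebra.
From mathcomp Require Import fingroup perm.
Set Implicit Arguments.
Unset Strict Implicit.
Unset Printing Implicit Defensive.
Import Order.TTheory GRing.Theory Num.Theory.
Local Open Scope ring_scope.

(* Underlying variables V_1..V_p are indexed by 'I_p.  The weighted DAG is  *)
(* the matrix C with  C i j = c_ij  = weight of the edge V_j -> V_i         *)
(* (edge present iff c_ij <> 0).  Zs is the set of unobserved variables Z.  *)
Section SEM_ME.
Variables (R : fieldType) (p : nat).
Implicit Types (C : 'M[R]_p) (Zs : {set 'I_p}).

Definition me_edge C : rel 'I_p := fun a b => C b a != 0.

Definition me_desc C (a b : 'I_p) : bool :=
  [exists k, me_edge C a k && connect (me_edge C) k b].

Definition me_dag C : Prop := forall i, ~~ me_desc C i i.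

(* total causal effect of V_a on V_b: sum over directed paths a ~> b of the
   products of edge weights.  (C ^+ k) b a is the sum over directed walks of
   length k from a to b of the weight products; in a DAG walks are paths and
   have length < p; k = 0 gives 1 iff a = b. *)
Definition me_total_effect C (a b : 'I_p) : R := \sum_(k < p) (C ^+ k) b a.

Definition me_uleaf C Zs : {set 'I_p} := [set i in Zs | [forall k, C k i == 0]].
Definition me_nuleaf C Zs : {set 'I_p} := ~: me_uleaf C Zs.

(* mixing matrix W^ME: entry (V_v, N_{V_j}) for j a nu-leaf node
   (columns are only meaningful for j \in me_nuleaf C Zs) *)
Definition me_mix C (v j : 'I_p) : R := me_total_effect C j v.

Definition me_faithful C : Prop :=
  forall a b, me_desc C a b -> me_total_effect C a b != 0.

Definition me_mix_equiv Zs C1 C2 : Prop :=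
  exists (s : 'I_p -> 'I_p) (lam : 'I_p -> R),
    [/\ {in me_nuleaf C1 Zs &, injective s},
        s @: me_nuleaf C1 Zs = me_nuleaf C2 Zs &
        forall j, j \in me_nuleaf C1 Zs ->
          lam j != 0 /\ forall v, me_mix C2 v (s j) = lam j * me_mix C1 v j].

(* u-leaf node z is put into the group of its parent v: z has no other
   parents, or all its other parents are ancestors of v *)
Definition me_attach C Zs (z v : 'I_p) : bool :=
  [&& z \in me_uleaf C Zs, C z v != 0 &
      [forall w, ((C z w != 0) && (w != v)) ==> me_desc C w v]].

Definition me_aog C Zs : {set {set 'I_p}} :=
  [set v |: [set z | me_attach C Zs z v] | v in me_nuleaf C Zs]
  :|: [set [set z] | z in [set z in me_uleaf C Zs | [forall v, ~~ me_attach C Zs z v]]].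

(* C' is in the AOG equivalence class of C (same underlying variables and
   same set Zs of unobserved variables) *)
Definition me_aog_class Zs C C' : Prop :=
  [/\ me_dag C', me_mix_equiv Zs C C' & me_aog C' Zs = me_aog C Zs].

End SEM_ME.

(* Linear SEM-UR:  H = N_H,  X = B H + A X + N_X, A strictly lower          *)
(* triangular; h latent variables 'I_h, n observed variables 'I_n.          *)
Section SEM_UR.
Variables (R : fieldType) (h n : nat).
Implicit Types (B : 'M[R]_(n, h)) (A : 'M[R]_n).

Definition ur_sltri A : Prop := forall j k : 'I_n, A j k != 0 -> (k < j)%N.

Definition ur_edge A : rel 'I_n := fun k j => A j k != 0.

Definition ur_descX A (k j : 'I_n) : bool :=
  [exists l, ur_edge A k l && connect (ur_edge A) l j].

Definition ur_descH B A (i : 'I_h) (j : 'I_n) : bool :=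
  [exists l, (B l i != 0) && connect (ur_edge A) l j].

Definition ur_teX A (k j : 'I_n) : R := \sum_(m < n) (A ^+ m) j k.
Definition ur_teH B A (i : 'I_h) (j : 'I_n) : R :=
  \sum_(l < n) ur_teX A l j * B l i.

Definition ur_faithful B A : Prop :=
  (forall k j, ur_descX A k j -> ur_teX A k j != 0) /\
  (forall i j, ur_descH B A i j -> ur_teH B A i j != 0).

Definition ur_mix B A : 'M[R]_(n, h + n) :=
  row_mx (invmx (1%:M - A) *m B) (invmx (1%:M - A)).

Definition ur_mix_equiv (W1 W2 : 'M[R]_(n, h + n)) : Prop :=
  exists (s : 'S_(h + n)) (lam : 'I_(h + n) -> R),
    (forall c, lam c != 0) /\ forall r c, W2 r (s c) = lam c * W1 r c.

Definition ur_node := ('I_h + 'I_n)%type.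

(* latent H_i goes into the group of its child X_x *)
Definition ur_attach B A (i : 'I_h) (x : 'I_n) : bool :=
  (B x i != 0) && [forall k, ((B k i != 0) && (k != x)) ==> ur_descX A x k].

Definition ur_aog B A : {set {set ur_node}} :=
  [set (@inr 'I_h 'I_n x |: [set @inl 'I_h 'I_n i | i in [set i | ur_attach B A i x]])
     | x : 'I_n]
  :|: [set [set @inl 'I_h 'I_n i] | i in [set i | [forall x, ~~ ur_attach B A i x]]].

Definition ur_relabel (pi : {perm 'I_h}) (u : ur_node) : ur_node :=
  match u with inl i => inl (pi i) | inr x => inr x end.

Definition ur_aog_class B A B' A' : Prop :=
  [/\ ur_sltri A', ur_mix_equiv (ur_mix B A) (ur_mix B' A') &
      exists pi : {perm 'I_h},
        [set ur_relabel pi @: S | S : {set ur_node} in ur_aog B' A'] = ur_aog B A].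

End SEM_UR.

(* Main.v *)
Require Import Defs.
From HB Require Import structures.
From mathcomp Require Import all_boot all_order all_algebra.
From mathcomp Require Import fingroup perm.
Set Implicit Arguments.
Unset Strict Implicit.
Unset Printing Implicit Defensive.
Import Order.TTheory GRing.Theory Num.Theory.

Module Dev.

Section Graph.
Variables (T : finType) (e : rel T).

Definition gdesc (a b : T) : bool := [exists k, e a k && connect e k b].

Lemma gdesc_connect a b : gdesc a b -> connect e a b.
Proof.
case/existsP=> k /andP[eak ckb]; exact: connect_trans (connect1 eak) ckb.
Qed.

Lemma connect_gdesc a b : connect e a b -> a != b -> gdesc a b.
Proof.
case/connectP=> [[|x p]] /= => [_ -> | ]; first by rewrite eqxx.
case/andP=> eax px -> _; apply/existsP; exists x; rewrite eax /=.
by apply/connectP; exists p.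
Qed.

Lemma gdesc_connect_trans a b c : gdesc a b -> connect e b c -> gdesc a c.
Proof.
case/existsP=> k /andP[eak ckb] cbc; apply/existsP; exists k.
by rewrite eak (connect_trans ckb cbc).
Qed.

Lemma connect_gdesc_trans a b c : connect e a b -> gdesc b c -> gdesc a c.
Proof.
move=> cab dbc; have [->//|nab] := eqVneq a b.
have [k /andP[eak ckb]] := existsP (connect_gdesc cab nab).
apply/existsP; exists k; rewrite eak /=.
exact: connect_trans ckb (gdesc_connect dbc).
Qed.

Lemma connect_last a b : connect e a b -> a != b -> exists2 w, connect e a w & e w b.
Proof.
case/connectP=> p; elim/last_ind: p => [/= _ -> | p x _]; first by rewrite eqxx.
rewrite rcons_path last_rcons => /andP[pp ex] -> _.
by exists (last a p) => //; apply/connectP; exists p.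
Qed.

Lemma connect_ind (P : T -> Prop) a b :
  (forall x y, e x y -> P x -> P y) -> P a -> connect e a b -> P b.
Proof.
move=> Hst Pa /connectP[p pth ->]; elim: p a Pa pth => [|x p IH] a Pa //=.
case/andP=> eax px; exact: IH (Hst _ _ eax Pa) px.
Qed.

Hypothesis acyc : forall x, ~~ gdesc x x.

Lemma connect_antisym a b : connect e a b -> connect e b a -> a = b.
Proof.
move=> cab cba; apply/eqP; apply/negPn/negP=> nab.
by move: (acyc a); rewrite (gdesc_connect_trans (connect_gdesc cab nab) cba).
Qed.

Definition ganc (b : T) : {set T} := [set u | gdesc u b].

Lemma ganc_edge a l : e a l -> (#|ganc a| < #|ganc l|)%N.
Proof.
move=> eal; apply: proper_card; apply/properP; split.
  apply/subsetP=> u; rewrite !inE => dua.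
  exact: gdesc_connect_trans dua (connect1 eal).
exists a; rewrite !inE ?acyc //.
by apply/existsP; exists l; rewrite eal connect0.
Qed.

Lemma ganc_lt b : (#|ganc b| < #|T|)%N.
Proof.
apply: proper_card; apply/properP; split; first exact: subset_predT.
by exists b => //; rewrite inE acyc.
Qed.

Definition gdes (a : T) : {set T} := [set u | gdesc a u].

Lemma gdes_lt a l : gdesc a l -> (#|gdes l| < #|gdes a|)%N.
Proof.
move=> dal; apply: proper_card; apply/properP; split.
  apply/subsetP=> u; rewrite !inE => dlu.
  exact: gdesc_connect_trans dal (gdesc_connect dlu).
by exists l; rewrite !inE ?acyc.
Qed.

Lemma gdesc_trans a b c : gdesc a b -> gdesc b c -> gdesc a c.
Proof. move=> dab dbc; exact: gdesc_connect_trans dab (gdesc_connect dbc). Qed.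

End Graph.

Lemma measure_ind (T : Type) (f : T -> nat) (P : T -> Prop) :
  (forall x, (forall y, (f y < f x)%N -> P y) -> P x) -> forall x, P x.
Proof.
move=> H x; have [n] := ubnP (f x); elim: n x => [//|n IH] x fx.
apply: H => y fy; apply: IH; exact: leq_trans fy _.
Qed.


Local Open Scope ring_scope.

Lemma sum_neq0 (R : fieldType) (I : finType) (F : I -> R) :
  \sum_i F i != 0 -> exists i, F i != 0.
Proof.
move=> H; case: (boolP [exists i, F i != 0]) => [/existsP[i Hi]|/existsPn Hn]; first by exists i.
by move: H; rewrite big1 ?eqxx // => i _; apply/eqP; move: (Hn i); rewrite negbK.
Qed.

Lemma sum_neq0_ex (R : fieldType) (I : finType) (F : I -> R) j :
  F j != 0 -> \sum_i F i = 0 -> exists2 i, i != j & F i != 0.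
Proof.
move=> Fj Hs; case: (boolP [exists i in [pred i | i != j], F i != 0]) => [/exists_inP[i Hi1 Hi2]|/exists_inPn Hn]; first by exists i.
move: Fj; rewrite (bigD1 j) //= big1 ?addr0 in Hs; first by rewrite Hs eqxx.
by move=> i ij; apply/eqP; move: (Hn i ij); rewrite negbK.
Qed.

Section Mx.
Variables (R : fieldType) (p : nat) (C : 'M[R]_p).

Definition medge : rel 'I_p := fun a b => C b a != 0.
Definition TE : 'M[R]_p := \sum_(k < p) C ^+ k.

Lemma mulE (A B : 'M[R]_p) i j : (A * B) i j = \sum_k A i k * B k j.
Proof. by rewrite -mulmxE mxE. Qed.

Lemma oneE i j : (1 : 'M[R]_p) i j = (i == j)%:R.
Proof. by rewrite -idmxE mxE. Qed.

Lemma mxpow_connect k a b : (C ^+ k) b a != 0 -> connect medge a b.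
Proof.
elim: k b => [|k IH] b.
  by rewrite expr0 oneE; have [->|nba] := eqVneq b a; rewrite ?connect0 //= eqxx.
rewrite exprS mulE => /sum_neq0[l]; rewrite mulf_eq0 negb_or => /andP[H1 H2].
exact: connect_trans (IH _ H2) (connect1 (H1 : medge l b)).
Qed.

Lemma mxpowS_gdesc k a b : (C ^+ k.+1) b a != 0 -> gdesc medge a b.
Proof.
rewrite exprSr mulE => /sum_neq0[l]; rewrite mulf_eq0 negb_or => /andP[H1 H2].
by apply/existsP; exists l; rewrite (H2 : medge a l) (mxpow_connect H1).
Qed.

Lemma TE_connect a b : TE b a != 0 -> connect medge a b.
Proof. rewrite /TE summxE => /sum_neq0[k]; exact: mxpow_connect. Qed.

Hypothesis acyc : forall x, ~~ gdesc medge x x.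

Lemma mxpow_ganc k a b : (C ^+ k) b a != 0 -> (k + #|ganc medge a| <= #|ganc medge b|)%N.
Proof.
elim: k b => [|k IH] b.
  by rewrite expr0 oneE; have [->|nba] := eqVneq b a; rewrite ?leqnn //= eqxx.
rewrite exprS mulE => /sum_neq0[l]; rewrite mulf_eq0 negb_or => /andP[H1 H2].
have := IH _ H2; have := ganc_edge acyc (H1 : medge l b).
by rewrite addSn; move=> h1 h2; apply: leq_trans h1; apply: leq_ltn_trans h2 _.
Qed.

Lemma mxpow_p : C ^+ p = 0.
Proof.
apply/matrixP=> b a; rewrite mxE; apply/eqP; apply/negPn/negP=> /mxpow_ganc.
move=> h2; have h1 := ganc_lt acyc b; have cp : #|'I_p| = p := card_ord p.
have := leq_ltn_trans h2 h1; rewrite cp; apply/negP; rewrite -leqNgt; exact: leq_addr.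
Qed.

Lemma TE_left : TE = 1 + C * TE.
Proof.
rewrite /TE; case: p C mxpow_p => [|q] C0 Cp.
  by apply/matrixP=> [[]].
rewrite mulr_sumr big_ord_recl expr0; congr (_ + _).
rewrite big_ord_recr /= -exprS Cp addr0; apply: eq_bigr => i _; by rewrite -exprS.
Qed.

Lemma TE_right : TE = 1 + TE * C.
Proof.
rewrite /TE; case: p C mxpow_p => [|q] C0 Cp.
  by apply/matrixP=> [[]].
rewrite mulr_suml big_ord_recl expr0; congr (_ + _).
rewrite big_ord_recr /= -exprSr Cp addr0; apply: eq_bigr => i _; by rewrite -exprSr.
Qed.

Lemma TE_diag a : TE a a = 1.
Proof.
rewrite /TE summxE (bigD1 (Ordinal (leq_ltn_trans (leq0n a) (ltn_ord a)))) //=.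
rewrite expr0 oneE eqxx big1 ?addr0 // => i ni0.
have ip : (0 < i)%N by rewrite lt0n; apply: contraNneq ni0 => h; apply/eqP; apply: val_inj; exact: h.
rewrite -(prednK ip); apply/eqP; apply/negPn/negP=> /mxpowS_gdesc; exact/negP/acyc.
Qed.

Lemma TE_rowE y a : TE y a = (y == a)%:R + \sum_w C y w * TE w a.
Proof. by rewrite {1}TE_left mxE oneE mulE. Qed.

Lemma TE_colE y a : TE y a = (y == a)%:R + \sum_w TE y w * C w a.
Proof. by rewrite {1}TE_right mxE oneE mulE. Qed.

End Mx.

Section ME1.
Variables (R : fieldType) (p : nat) (Zs : {set 'I_p}) (C : 'M[R]_p).
Hypothesis dag : me_dag C.

Local Notation e := (medge C).
Local Notation le := (connect (medge C)).
Local Notation N := (me_nuleaf C Zs).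
Local Notation U := (me_uleaf C Zs).

Lemma acycC : forall x, ~~ gdesc e x x.
Proof. exact: dag. Qed.

Lemma teE a b : me_total_effect C a b = TE C b a.
Proof. by rewrite /me_total_effect /TE summxE. Qed.

Lemma inN_edge a l : C l a != 0 -> a \in N.
Proof.
move=> H; rewrite /me_nuleaf /me_uleaf !inE negb_and; apply/orP; right.
by apply/forallPn; exists l.
Qed.

Lemma desc_inN a b : gdesc e a b -> a \in N.
Proof. by case/existsP=> k /andP[H _]; exact: inN_edge H. Qed.

Lemma le_inN a b : le a b -> a != b -> a \in N.
Proof. by move=> H1 H2; apply: desc_inN (connect_gdesc H1 H2). Qed.

Lemma inU a : (a \in U) = (a \notin N).
Proof. by rewrite /me_nuleaf in_setC negbK. Qed.

Definition Aset (y : 'I_p) : {set 'I_p} := [set k in N | le k y].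

Lemma inA k y : (k \in Aset y) = (k \in N) && le k y.
Proof. by rewrite inE. Qed.

Lemma A_le y y' : le y y' -> Aset y \subset Aset y'.
Proof. move=> H; apply/subsetP=> k; rewrite !inA => /andP[-> /connect_trans]; exact. Qed.

Lemma A_inj v w : v \in N -> w \in N -> Aset v = Aset w -> v = w.
Proof.
move=> vN wN Hvw; apply: (connect_antisym acycC).
  have H1 : v \in Aset w by rewrite -Hvw inA vN connect0.
  by move: H1; rewrite inA => /andP[].
have : w \in Aset v by rewrite Hvw inA wN connect0.
by rewrite inA => /andP[].
Qed.

Lemma att_char z v :
  me_attach C Zs z v = [&& z \in U, v \in N & Aset z == Aset v].
Proof.
rewrite /me_attach; apply/andP/and3P.
  case=> zU /andP[Czv /forallP Hw]; have vN := inN_edge Czv.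
  split=> //; apply/eqP/setP=> k; rewrite !inA; case kN: (k \in N) => //=.
  apply/idP/idP=> Hk.
    have kz : k != z by apply: contraTneq kN => ->; rewrite -inU.
    have [w kw Czw] := connect_last Hk kz; rewrite /medge in Czw.
    have [wv|wv] := eqVneq w v; first by rewrite -wv.
    have := Hw w; rewrite Czw wv /= => /gdesc_connect; exact: connect_trans kw.
  exact: connect_trans Hk (connect1 Czv).
case=> zU vN /eqP HA; split=> //.
have vz : le v z by have := inA v z; rewrite HA inA vN connect0.
have nvz : v != z by apply: contraTneq vN => ->; rewrite -inU.
have [w vw Czw] := connect_last vz nvz; rewrite /medge in Czw.
have wN := inN_edge Czw.
have wz : le w z := connect1 Czw.
have wv : le w v by have := inA w z; rewrite HA inA wN wz.
have wv' := connect_antisym acycC wv vw.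
rewrite -wv' Czw; apply/forallP=> w'; apply/implyP=> /andP[Czw' nw'].
have w'N := inN_edge Czw'.
have H1 : w' \in Aset z by rewrite inA w'N (connect1 Czw').
move: H1; rewrite HA inA => /andP[_ H]; apply: connect_gdesc => //; by rewrite wv'.
Qed.

Definition grp (v : 'I_p) : {set 'I_p} := v |: [set z | me_attach C Zs z v].

Lemma in_grp v y : v \in N -> (y \in grp v) = (Aset y == Aset v).
Proof.
move=> vN; rewrite /grp !inE att_char vN /=.
have [->|nyv] := eqVneq y v; first by rewrite eqxx.
rewrite /=; case yU: (y \in U) => //=.
apply/esym/negbTE; apply: contra nyv => /eqP HA; apply/eqP; apply: A_inj => //.
by move: yU; rewrite inU => /negbFE.
Qed.

Lemma single_char z :
  (z \in [set z in U | [forall v, ~~ me_attach C Zs z v]]) =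
  [forall v in N, Aset z != Aset v].
Proof.
rewrite inE; apply/andP/forall_inP.
  case=> zU /forallP Hv v vN; apply: contraNneq (Hv v) => HA.
  by rewrite att_char zU vN HA eqxx.
move=> H; split.
  rewrite inU; apply/negP=> zN; by move: (H z zN); rewrite eqxx.
apply/forallP=> v; rewrite att_char; apply/negP=> /and3P[_ vN /eqP HA].
by move: (H v vN); rewrite HA eqxx.
Qed.

Lemma aogE : me_aog C Zs = [set grp v | v in N] :|:
   [set [set z] | z in [set z | [forall v in N, Aset z != Aset v]]].
Proof.
rewrite /me_aog; congr (_ :|: _).
have -> // : [set z in U | [forall v, ~~ me_attach C Zs z v]] =
   [set z | [forall v in N, Aset z != Aset v]].
by apply/setP=> z; rewrite single_char inE.
Qed.

Lemma grp_self v : v \in grp v.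
Proof. by rewrite /grp !inE eqxx. Qed.

End ME1.

Lemma faith_TE (R : fieldType) (p : nat) (C : 'M[R]_p) :
  me_dag C -> me_faithful C -> forall y k, (TE C y k != 0) = connect (medge C) k y.
Proof.
move=> dag fa y k; apply/idP/idP; first exact: TE_connect.
have [->|nky] := eqVneq k y; first by rewrite TE_diag ?oner_eq0 //; exact: dag.
move=> cky; have := fa k y (connect_gdesc cky nky); by rewrite teE.
Qed.

Section ME2.
Variables (R : fieldType) (p : nat) (Zs : {set 'I_p}) (C C' : 'M[R]_p).
Hypotheses (dag : me_dag C) (fa : me_faithful C) (dag' : me_dag C').
Variables (s : 'I_p -> 'I_p) (lam : 'I_p -> R).
Hypotheses (sinj : {in me_nuleaf C Zs &, injective s})
           (simg : s @: me_nuleaf C Zs = me_nuleaf C' Zs)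
           (smix : forall j, j \in me_nuleaf C Zs ->
              lam j != 0 /\ forall v, me_mix C' v (s j) = lam j * me_mix C v j).

Local Notation le := (connect (medge C)).
Local Notation le' := (connect (medge C')).
Local Notation N := (me_nuleaf C Zs).
Local Notation N' := (me_nuleaf C' Zs).
Local Notation A := (Aset Zs C).
Local Notation A' := (Aset Zs C').

Lemma mixTE j v : j \in N -> TE C' v (s j) = lam j * TE C v j.
Proof. by move=> jN; have [_ H] := smix jN; move: (H v); rewrite /me_mix !teE. Qed.

Lemma lam_neq0 j : j \in N -> lam j != 0.
Proof. by move=> jN; have [] := smix jN. Qed.

Lemma TE'_supp j y : j \in N -> (TE C' y (s j) != 0) = le j y.
Proof. by move=> jN; rewrite mixTE // mulf_eq0 negb_or lam_neq0 // faith_TE. Qed.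

Lemma F1 j y : j \in N -> le j y -> le' (s j) y.
Proof. by move=> jN; rewrite -TE'_supp //; apply: TE_connect. Qed.

Lemma sN' j : j \in N -> s j \in N'.
Proof. by move=> jN; rewrite -simg; apply: imset_f. Qed.

Lemma N's w : w \in N' -> exists2 j, j \in N & w = s j.
Proof. by rewrite -simg => /imsetP. Qed.

Lemma le_s j : j \in N -> le j (s j).
Proof.
move=> jN; rewrite -TE'_supp // TE_diag ?oner_eq0 //; exact: dag'.
Qed.

Lemma le'_s j : j \in N -> le' (s j) j.
Proof.
move=> jN; apply: TE_connect; rewrite mixTE // TE_diag ?mulr1 ?lam_neq0 //; exact: dag.
Qed.

Lemma lemmaM y w : C' y w != 0 -> exists2 k, k \in N & le k y && le' w (s k).
Proof.
move: w; apply: (@measure_ind _ (fun w => #|gdes (medge C') w|) (fun w => C' y w != 0 -> exists2 k, k \in N & le k y && le' w (s k))) => w IH Cyw.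
have [k0 k0N wk0] := N's (inN_edge Zs Cyw).
have [Hy|Hy] := boolP (TE C' y w != 0).
  exists k0 => //; move: Hy; rewrite wk0 TE'_supp // => ->; exact: connect0.
have nyw : y != w.
  apply: contraNneq (dag' w) => yw; apply/existsP; exists y.
  by rewrite /me_edge Cyw yw connect0.
move: Hy; rewrite negbK TE_rowE ?(negPf nyw) ?add0r; last exact: dag'.
move/eqP=> Hs.
have Ht : C' y w * TE C' w w != 0 by rewrite TE_diag ?mulr1 //; exact: dag'.
have [w' nw' ] := sum_neq0_ex Ht Hs.
rewrite mulf_eq0 negb_or => /andP[Cyw' Tw'w].
have cww' := TE_connect Tw'w.
have dww' : gdesc (medge C') w w' by apply: connect_gdesc => //; rewrite eq_sym.
have [k kN /andP[ky w'k]] := IH w' (gdes_lt dag' dww') Cyw'.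
by exists k => //; rewrite ky (connect_trans cww' w'k).
Qed.

Lemma lemmaX x w : x \in N -> C' x w != 0 -> le' w (s x).
Proof.
move=> xN Cxw; have [k kN /andP[kx wk]] := lemmaM Cxw.
apply: connect_trans wk _; apply: F1 => //; exact: connect_trans kx (le_s xN).
Qed.

Lemma step3 x : x \in N -> x \notin N' -> A' x = A' (s x).
Proof.
move=> xN xN'; apply/setP=> w; rewrite !inA; case wN': (w \in N') => //=.
apply/idP/idP=> H; last exact: connect_trans H (le'_s xN).
have wx : w != x by apply: contraNneq xN' => <-.
have [q wq Cxq] := connect_last H wx.
exact: connect_trans wq (lemmaX xN Cxq).
Qed.

End ME2.

Section ME3.
Variables (R : fieldType) (p : nat) (Zs : {set 'I_p}) (C C' : 'M[R]_p).
Hypotheses (dag : me_dag C) (fa : me_faithful C) (dag' : me_dag C').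
Variables (s : 'I_p -> 'I_p) (lam : 'I_p -> R).
Hypotheses (sinj : {in me_nuleaf C Zs &, injective s})
           (simg : s @: me_nuleaf C Zs = me_nuleaf C' Zs)
           (smix : forall j, j \in me_nuleaf C Zs ->
              lam j != 0 /\ forall v, me_mix C' v (s j) = lam j * me_mix C v j).

Local Notation le := (connect (medge C)).
Local Notation le' := (connect (medge C')).
Local Notation N := (me_nuleaf C Zs).
Local Notation N' := (me_nuleaf C' Zs).
Local Notation A := (Aset Zs C).
Local Notation A' := (Aset Zs C').
Local Notation G := (grp Zs C).
Local Notation G' := (grp Zs C').

Let step3' := step3 dag fa dag' simg smix.
Let le_s' := le_s dag fa dag' smix.
Let TE'supp := TE'_supp dag fa smix.

Lemma grp_inj (D : 'M[R]_p) : me_dag D -> {in me_nuleaf D Zs &, injective (grp Zs D)}.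
Proof.
move=> dD v1 v2 v1N v2N H.
have : v1 \in grp Zs D v2 by rewrite -H grp_self.
by rewrite in_grp // => /eqP; apply: A_inj.
Qed.

Lemma card_nuG : #|[set G v | v in N]| = #|[set G' v | v in N']|.
Proof.
rewrite !card_in_imset; try exact: grp_inj.
by rewrite -simg card_in_imset.
Qed.

Hypothesis Haog : me_aog C' Zs = me_aog C Zs.

Lemma step4 v : v \in N -> G v \in [set G' v | v in N'].
Proof.
move=> vN.
have : G v \in me_aog C' Zs by rewrite Haog aogE //; apply/setUP; left; apply: imset_f.
rewrite aogE // => /setUP[//|/imsetP[z]].
rewrite inE => /forall_inP Hz Hvz.
have : v \in [set z] by rewrite -Hvz grp_self.
rewrite inE => /eqP vz; rewrite -vz in Hz.
case vN': (v \in N').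
  by move: (Hz v vN'); rewrite eqxx.
move: (Hz (s v) (sN' simg vN)); rewrite (step3' vN) ?vN' //.
by rewrite eqxx.
Qed.

Lemma nuG_eq : [set G v | v in N] = [set G' v | v in N'].
Proof.
apply/eqP; rewrite eqEcard card_nuG leqnn andbT.
apply/subsetP=> X /imsetP[v vN ->]; exact: step4.
Qed.

Definition f (m : 'I_p) : 'I_p := odflt m [pick v in N | G' (s m) == G v].

Lemma f_spec m : m \in N -> f m \in N /\ G' (s m) = G (f m).
Proof.
move=> mN; have : G' (s m) \in [set G v | v in N].
  by rewrite nuG_eq; apply/imsetP; exists (s m) => //; apply: (sN' simg).
move=> /imsetP[v vN Hv]; rewrite /f; case: pickP => [u /andP[uN /eqP Hu]|] //=.
by move/(_ v); rewrite vN Hv eqxx.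
Qed.

Lemma f_le m : m \in N -> le m (f m).
Proof.
move=> mN; have [fN Hf] := f_spec mN.
have : s m \in G (f m) by rewrite -Hf grp_self.
rewrite in_grp // => /eqP HA.
have : m \in A (s m) by rewrite inA mN (le_s' mN).
by rewrite HA inA => /andP[].
Qed.

Lemma f_inj : {in N &, injective f}.
Proof.
move=> m1 m2 m1N m2N Hf.
have [_ H1] := f_spec m1N; have [_ H2] := f_spec m2N.
have s1N := sN' simg m1N; have s2N := sN' simg m2N.
have : s m1 \in G' (s m2) by rewrite H2 -Hf -H1 grp_self.
rewrite in_grp // => /eqP /(A_inj dag' s1N s2N); exact: sinj.
Qed.

Lemma f_id m : m \in N -> f m = m.
Proof.
move: m; apply: (@measure_ind _ (fun m => #|gdes (medge C) m|)
   (fun m => m \in N -> f m = m)) => m IH mN.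
apply/eqP; apply/negPn/negP=> nfm.
have [fN _] := f_spec mN.
have dm : gdesc (medge C) m (f m) by apply: connect_gdesc; [exact: f_le | rewrite eq_sym].
have := IH _ (gdes_lt dag dm) fN => /(f_inj fN mN) Hm.
by move: nfm; rewrite Hm eqxx.
Qed.

Lemma A_s m : m \in N -> A (s m) = A m.
Proof.
move=> mN; have [_ Hf] := f_spec mN; rewrite f_id // in Hf.
have : s m \in G m by rewrite -Hf grp_self.
by rewrite in_grp // => /eqP.
Qed.

Lemma edge_mono k y : k \in N -> C' y (s k) != 0 -> le k y.
Proof.
move: k; apply: (@measure_ind _ (fun k => #|gdes (medge C) k|)
   (fun k => k \in N -> C' y (s k) != 0 -> le k y)) => k IH kN Cy.
have [Hy|Hy] := boolP (TE C' y (s k) != 0).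
  by move: Hy; rewrite TE'supp.
have nyw : y != s k.
  apply: contraNneq (dag' (s k)) => yw; apply/existsP; exists y.
  by rewrite /me_edge Cy yw connect0.
move: Hy; rewrite negbK TE_rowE ?(negPf nyw) ?add0r; last exact: dag'.
move/eqP=> Hs.
have Ht : C' y (s k) * TE C' (s k) (s k) != 0 by rewrite TE_diag ?mulr1 //; exact: dag'.
have [w nw] := sum_neq0_ex Ht Hs.
rewrite mulf_eq0 negb_or => /andP[Cyw Twk].
have [k' k'N wk'] := N's simg (inN_edge Zs Cyw).
move: Twk; rewrite wk' TE'supp // => kk'.
have : k \in A k' by rewrite -A_s // inA kN.
rewrite inA => /andP[_ kk'2].
have nkk' : k != k' by apply: contraNneq nw => ->; rewrite wk'.
have dkk' : gdesc (medge C) k k' := connect_gdesc kk'2 nkk'.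
apply: connect_trans kk'2 (IH _ (gdes_lt dag dkk') k'N _).
by rewrite -wk'.
Qed.

Lemma part1 : me_faithful C'.
Proof.
move=> a b dab.
have [j jN aj] := N's simg (desc_inN Zs dab).
rewrite teE aj TE'supp //.
apply: (@connect_ind _ _ (fun u => le j u) a b _ _ (gdesc_connect dab)); last first.
  by rewrite aj; exact: le_s' jN.
move=> x y Cyx jx.
have [k kN xk] := N's simg (inN_edge Zs Cyx).
have : j \in A k by rewrite -A_s // -xk inA jN.
rewrite inA => /andP[_ jk]; apply: connect_trans jk (edge_mono kN _).
by rewrite -xk.
Qed.

End ME3.

Section ME4.
Variables (R : fieldType) (p : nat) (Zs : {set 'I_p}) (C C' : 'M[R]_p).
Hypotheses (dag : me_dag C) (fa : me_faithful C) (dag' : me_dag C') (fa' : me_faithful C').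
Variables (s : 'I_p -> 'I_p) (lam : 'I_p -> R).
Hypotheses (sinj : {in me_nuleaf C Zs &, injective s})
           (simg : s @: me_nuleaf C Zs = me_nuleaf C' Zs)
           (smix : forall j, j \in me_nuleaf C Zs ->
              lam j != 0 /\ forall v, me_mix C' v (s j) = lam j * me_mix C v j).

Local Notation le := (connect (medge C)).
Local Notation le' := (connect (medge C')).
Local Notation N := (me_nuleaf C Zs).
Local Notation N' := (me_nuleaf C' Zs).
Local Notation A := (Aset Zs C).
Local Notation A' := (Aset Zs C').
Local Notation G := (grp Zs C).
Local Notation G' := (grp Zs C').

Let le_s' := le_s dag fa dag' smix.
Let le'_s' := le'_s dag smix.
Let TE'supp := TE'_supp dag fa smix.
Let F1' := F1 dag fa smix.

Lemma A'E y : A' y = s @: A y.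
Proof.
apply/setP=> w; apply/idP/idP.
  rewrite inA => /andP[wN wy]; have [k kN wk] := N's simg wN.
  apply/imsetP; exists k => //; rewrite inA kN /= -TE'supp //.
  by rewrite -wk (faith_TE dag' fa').
case/imsetP=> k Hk ->; have /andP[kN ky] : (k \in N) && le k y by rewrite -inA.
by rewrite inA (sN' simg kN) F1'.
Qed.

Lemma A_s2 v : v \in N -> A (s v) = A v.
Proof.
move=> vN; apply/setP=> k; rewrite !inA; case kN: (k \in N) => //=.
apply/idP/idP=> H; last exact: connect_trans H (le_s' vN).
have H1 := connect_trans (F1' kN H) (le'_s' vN).
by rewrite -TE'supp // (faith_TE dag' fa').
Qed.

Lemma imsA y z : (s @: A y == s @: A z) = (A y == A z).
Proof.
have AN : forall x k, k \in A x -> k \in N by move=> x k; rewrite inA => /andP[].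
apply/eqP/eqP=> [H|->//]; apply/setP=> k; apply/idP/idP=> Hk.
  have : s k \in s @: A z by rewrite -H; apply: imset_f.
  case/imsetP=> k' Hk' skk'.
  by rewrite (sinj (AN _ _ Hk) (AN _ _ Hk') skk').
have : s k \in s @: A y by rewrite H; apply: imset_f.
case/imsetP=> k' Hk' skk'.
by rewrite (sinj (AN _ _ Hk) (AN _ _ Hk') skk').
Qed.

Lemma G'_s v : v \in N -> G' (s v) = G v.
Proof.
move=> vN; apply/setP=> y.
rewrite in_grp ?(sN' simg vN) // in_grp // !A'E A_s2 //; exact: imsA.
Qed.

Lemma SG_eq : [set z | [forall v in N', A' z != A' v]] = [set z | [forall v in N, A z != A v]].
Proof.
apply/setP=> z; rewrite !inE; apply/forall_inP/forall_inP=> H v vN.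
  apply: contra (H _ (sN' simg vN)) => /eqP HA.
  by rewrite !A'E A_s2 // HA.
have [k kN ->] := N's simg vN.
by rewrite !A'E A_s2 // imsA; apply: H.
Qed.

Lemma part2 : me_aog C' Zs = me_aog C Zs.
Proof.
rewrite !aogE // SG_eq; congr (_ :|: _).
rewrite -simg -imset_comp; apply: eq_in_imset => v vN /=; exact: G'_s.
Qed.

End ME4.

Lemma colP h n (c : 'I_(h + n)) :
  (exists i, c = lshift n i) \/ (exists k, c = rshift h k).
Proof. by rewrite -(splitK c); case: (split c) => [i|k]; [left; exists i|right; exists k]. Qed.

Section UR1.
Variables (R : fieldType) (h n : nat) (B : 'M[R]_(n, h)) (A : 'M[R]_n).
Hypothesis slt : ur_sltri A.

Local Notation le := (connect (medge A)).

Lemma sl_edge k j : medge A k j -> (k < j)%N.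
Proof. exact: slt. Qed.

Lemma sl_le k j : le k j -> (k <= j)%N.
Proof.
move=> H; apply: (@connect_ind _ _ (fun u : 'I_n => (k <= u)%N) k j _ (leqnn k) H).
by move=> x y /sl_edge xy kx; apply: leq_trans kx (ltnW xy).
Qed.

Lemma sl_gdesc k j : gdesc (medge A) k j -> (k < j)%N.
Proof. by case/existsP=> l /andP[/sl_edge kl /sl_le lj]; apply: leq_trans kl lj. Qed.

Lemma acycA : forall x, ~~ gdesc (medge A) x x.
Proof. by move=> x; apply/negP=> /sl_gdesc; rewrite ltnn. Qed.

Lemma le_antisym k j : le k j -> le j k -> k = j.
Proof. move=> H1 H2; exact: (connect_antisym acycA H1 H2). Qed.

Lemma le_lt k j : le k j -> k != j -> (k < j)%N.
Proof. by move=> H1 H2; apply: sl_gdesc (connect_gdesc H1 H2). Qed.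

Lemma teXE k j : ur_teX A k j = TE A j k.
Proof. by rewrite /ur_teX /TE summxE. Qed.

Lemma invTE : invmx (1%:M - A) = TE A.
Proof.
have H : (1%:M - A) *m TE A = 1%:M.
  rewrite mulmxBl mul1mx mulmxE {1}(TE_left acycA) idmxE.
  by rewrite addrK.
have [U _] := mulmx1_unit H.
by rewrite -[RHS](mulKmx U) H mulmx1.
Qed.

Lemma teHE i j : ur_teH B A i j = (TE A *m B) j i.
Proof. by rewrite /ur_teH mxE; apply: eq_bigr => l _; rewrite teXE. Qed.

Lemma mixL r i : ur_mix B A r (lshift n i) = (TE A *m B) r i.
Proof. by rewrite /ur_mix row_mxEl invTE. Qed.

Lemma mixR r k : ur_mix B A r (rshift h k) = TE A r k.
Proof. by rewrite /ur_mix row_mxEr invTE. Qed.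

Lemma TEd k : TE A k k = 1.
Proof. exact: TE_diag acycA k. Qed.

Lemma TE_lt (y k : 'I_n) : (y < k)%N -> TE A y k = 0.
Proof.
move=> yk; apply/eqP; apply/negPn/negP=> /TE_connect /sl_le.
by rewrite leqNgt yk.
Qed.

Hypothesis fa : ur_faithful B A.

Lemma TEsupp y k : (TE A y k != 0) = le k y.
Proof.
apply/idP/idP; first exact: TE_connect.
have [->|nky] := eqVneq k y; first by rewrite TEd oner_eq0.
move=> cky; have := fa.1 k y (connect_gdesc cky nky); by rewrite teXE.
Qed.

Lemma TBsupp y i : ((TE A *m B) y i != 0) = ur_descH B A i y.
Proof.
apply/idP/idP; last by move=> H; rewrite -teHE; apply: fa.2.
rewrite mxE => /sum_neq0[l]; rewrite mulf_eq0 negb_or => /andP[H1 H2].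
by apply/existsP; exists l; rewrite H2 (TE_connect H1).
Qed.

Definition upset k : {set 'I_n} := [set y | le k y].
Definition Scol (c : 'I_(h + n)) : {set 'I_n} := [set y | ur_mix B A y c != 0].

Lemma ScolR k : Scol (rshift h k) = upset k.
Proof. by apply/setP=> y; rewrite !inE mixR TEsupp. Qed.

Lemma ScolL i : Scol (lshift n i) = [set y | ur_descH B A i y].
Proof. by apply/setP=> y; rewrite !inE mixL TBsupp. Qed.

Lemma Scol_up c y y' : y \in Scol c -> le y y' -> y' \in Scol c.
Proof.
have [[i ->]|[k ->]] := colP c.
  rewrite ScolL !inE => /existsP[l /andP[Bl ly]] yy'.
  by apply/existsP; exists l; rewrite Bl (connect_trans ly yy').
by rewrite ScolR !inE => ky yy'; apply: connect_trans ky yy'.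
Qed.

Lemma upset_inj k m : upset k = upset m -> k = m.
Proof.
move=> H; apply: le_antisym.
  have H1 : m \in upset k by rewrite H inE connect0.
  by move: H1; rewrite inE.
have H1 : k \in upset m by rewrite -H inE connect0.
by move: H1; rewrite inE.
Qed.

Lemma attach_char i k : ur_attach B A i k = (Scol (lshift n i) == upset k).
Proof.
rewrite ScolL /ur_attach; apply/andP/eqP.
  case=> Bki /forallP Hl; apply/setP=> y; rewrite !inE; apply/existsP/idP.
    case=> l /andP[Bli ly]; have [lk|lk] := eqVneq l k; first by rewrite -lk.
    have := Hl l; rewrite Bli lk /= => /gdesc_connect kl.
    exact: connect_trans kl ly.
  by move=> ky; exists k; rewrite Bki.
move=> HS.
have : k \in [set y | ur_descH B A i y] by rewrite HS inE connect0.
rewrite inE => /existsP[l /andP[Bli lk]].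
have kl : le k l.
  have H1 : l \in upset k by rewrite -HS inE; apply/existsP; exists l; rewrite Bli connect0.
  by move: H1; rewrite inE.
have lk' := le_antisym lk kl; rewrite -lk' Bli; split=> //.
apply/forallP=> l'; apply/implyP=> /andP[Bl'i nl'].
have : l' \in upset k by rewrite -HS inE; apply/existsP; exists l'; rewrite Bl'i connect0.
rewrite inE => kl'; rewrite lk'; apply: connect_gdesc => //; rewrite eq_sym -lk'.
by [].
Qed.

Definition Lset k : {set 'I_h} := [set i | ur_attach B A i k].
Definition Sk k : {set 'I_(h + n)} := [set c | Scol c == upset k].

Lemma SkE k : Sk k = rshift h k |: lshift n @: Lset k.
Proof.
apply/setP=> c; rewrite !inE; have [[i ->]|[m ->]] := colP c.
  rewrite eq_sym eq_lrshift /=; apply/eqP/imsetP => [H|[i' Hi' /lshift_inj ->]].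
    by exists i => //; rewrite inE attach_char H.
  by move: Hi'; rewrite inE attach_char => /eqP.
rewrite ScolR eq_rshift; apply/eqP/orP=> [/upset_inj ->|[/eqP->//|/imsetP[i _ /eqP]]].
  by left.
by rewrite eq_sym eq_lrshift.
Qed.

Lemma card_Sk k : #|Sk k| = (#|Lset k|).+1.
Proof.
rewrite SkE cardsU1 card_imset; last exact: lshift_inj.
suff -> : rshift h k \notin lshift n @: Lset k by [].
by apply/imsetP=> [[i _ /eqP]]; rewrite eq_sym eq_lrshift.
Qed.

End UR1.

Lemma card_U1 h n (k : 'I_n) (X : {set 'I_h}) :
  #|rshift h k |: lshift n @: X| = (#|X|).+1.
Proof.
rewrite cardsU1 card_imset; last exact: lshift_inj.
suff -> : rshift h k \notin lshift n @: X by [].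
by apply/imsetP=> [[i _ /eqP]]; rewrite eq_sym eq_lrshift.
Qed.

Section UR2.
Variables (R : fieldType) (h n : nat) (B B' : 'M[R]_(n, h)) (A A' : 'M[R]_n).
Hypotheses (slt : ur_sltri A) (fa : ur_faithful B A) (slt' : ur_sltri A').
Variables (s : {perm 'I_(h + n)}) (lam : 'I_(h + n) -> R).
Hypotheses (lamnz : forall c, lam c != 0)
           (Hmix : forall r c, ur_mix B' A' r (s c) = lam c * ur_mix B A r c).

Local Notation le := (connect (medge A)).
Local Notation le' := (connect (medge A')).
Local Notation T' := (TE A').

Lemma Wsupp c y : (ur_mix B' A' y (s c) != 0) = (y \in Scol B A c).
Proof. by rewrite Hmix mulf_eq0 negb_or lamnz inE. Qed.

Definition sig k := (s^-1)%g (rshift h k).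

Lemma T'col k y : (T' y k != 0) = (y \in Scol B A (sig k)).
Proof. by rewrite -Wsupp /sig permKV mixR. Qed.

Lemma U1 k y : le k y -> T' y k != 0.
Proof.
have kin : k \in Scol B A (sig k) by rewrite -T'col TEd ?oner_eq0.
have below (y' : 'I_n) : (y' < k)%N -> y' \notin Scol B A (sig k).
  by move=> yk; rewrite -T'col TE_lt ?eqxx.
move=> ky; rewrite T'col.
have [[i Hi]|[m Hi]] := colP (sig k); rewrite Hi in kin below *.
  move: kin; rewrite ScolL // inE => /existsP[l /andP[Bli lk]].
  have lin : l \in Scol B A (lshift n i).
    by rewrite ScolL // inE; apply/existsP; exists l; rewrite Bli connect0.
  have lk' : l = k.
    apply/val_inj/eqP; rewrite eqn_leq (sl_le slt lk) /= leqNgt.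
    by apply/negP=> /below; rewrite lin.
  rewrite inE; apply/existsP; exists l; by rewrite Bli lk'.
move: kin; rewrite ScolR // inE => mk.
have min : m \in Scol B A (rshift h m) by rewrite ScolR // inE connect0.
have mk' : m = k.
  apply/val_inj/eqP; rewrite eqn_leq (sl_le slt mk) /= leqNgt.
  by apply/negP=> /below; rewrite min.
by rewrite inE mk'.
Qed.

Lemma child_ind (P : 'I_n -> Prop) i' :
  (forall l, (T' *m B') l i' != 0 -> P l) ->
  (forall l l', le' l' l -> P l' -> P l) ->
  forall l, B' l i' != 0 -> P l.
Proof.
move=> H1 H2; apply: (@measure_ind _ (fun l : 'I_n => val l)
   (fun l => B' l i' != 0 -> P l)) => l IH Bl.
have [Hy|Hy] := boolP ((T' *m B') l i' != 0); first exact: H1.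
move: Hy; rewrite negbK mxE => /eqP Hs.
have Ht : T' l l * B' l i' != 0 by rewrite TEd ?mul1r.
have [l' nl'] := sum_neq0_ex Ht Hs.
rewrite mulf_eq0 negb_or => /andP[Tll' Bl'].
have cl := TE_connect Tll'.
exact: (H2 _ _ cl (IH _ (le_lt slt' cl nl') Bl')).
Qed.

Lemma U2 c k i' : Scol B A c = upset A k -> s c = lshift n i' -> ur_attach B' A' i' k.
Proof.
move=> Sc sc.
have Wl y : ((T' *m B') y i' != 0) = (y \in upset A k).
  by rewrite -Sc -Wsupp sc mixL.
have ch : forall l, B' l i' != 0 -> le' k l.
  apply: child_ind => [l|l l' l'l kl']; last exact: connect_trans kl' l'l.
  rewrite Wl inE => /U1; exact: TE_connect.
have : (T' *m B') k i' != 0 by rewrite Wl inE connect0.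
rewrite mxE => /sum_neq0[l]; rewrite mulf_eq0 negb_or => /andP[Tkl Bli].
have lk := le_antisym slt' (TE_connect Tkl) (ch _ Bli).
rewrite /ur_attach -lk Bli /=; apply/forallP=> l'; apply/implyP=> /andP[Bl' nl'].
have H := ch _ Bl'; rewrite -lk in H; apply: (connect_gdesc H); by rewrite eq_sym.
Qed.

End UR2.

Lemma relabel_inj h n (pi : {perm 'I_h}) : injective (@ur_relabel h n pi).
Proof. by move=> [a|a] [b|b] //= []; first move/perm_inj ->. Qed.

Definition grpX (R : fieldType) h n (B : 'M[R]_(n, h)) (A : 'M[R]_n) (x : 'I_n) : {set ur_node h n} :=
  inr x |: [set inl i | i in [set i | ur_attach B A i x]].

Lemma card_grpX (R : fieldType) h n (B : 'M[R]_(n, h)) (A : 'M[R]_n) x :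
  #|grpX B A x| = (#|Lset B A x|).+1.
Proof.
rewrite /grpX cardsU1 card_imset; last by move=> a b [].
suff -> : (inr x : ur_node h n) \notin [set inl i | i in [set i | ur_attach B A i x]] by [].
by apply/imsetP=> [[i _]].
Qed.

Lemma cardL (R : fieldType) h n (B B' : 'M[R]_(n, h)) (A A' : 'M[R]_n) (pi : {perm 'I_h}) :
  [set ur_relabel pi @: S | S : {set ur_node h n} in ur_aog B' A'] = ur_aog B A ->
  forall k, #|Lset B A k| = #|Lset B' A' k|.
Proof.
move=> H k.
have : grpX B A k \in ur_aog B A by apply/setUP; left; apply: imset_f.
rewrite -H => /imsetP[S SA XS].
have : (inr k : ur_node h n) \in ur_relabel pi @: S by rewrite -XS !inE eqxx.
case/imsetP=> u uS; case: u uS => [i|x] //= uS [xk]; subst x.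
move: SA => /setUP[/imsetP[x _ Sx]|/imsetP[i _ Si]]; last first.
  by move: uS; rewrite Si inE.
have xk : x = k.
  move: uS; rewrite Sx !inE => /orP[/eqP[]//|/imsetP[i _ //]].
subst x.
apply: succn_inj; rewrite -!card_grpX XS card_imset ?Sx //; exact: relabel_inj.
Qed.

Section UR3.
Variables (R : fieldType) (h n : nat) (B B' : 'M[R]_(n, h)) (A A' : 'M[R]_n).
Hypotheses (slt : ur_sltri A) (fa : ur_faithful B A) (slt' : ur_sltri A').
Variables (s : {perm 'I_(h + n)}) (lam : 'I_(h + n) -> R).
Hypotheses (lamnz : forall c, lam c != 0)
           (Hmix : forall r c, ur_mix B' A' r (s c) = lam c * ur_mix B A r c).
Hypothesis cardLL : forall k, #|Lset B A k| = #|Lset B' A' k|.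

Local Notation le := (connect (medge A)).
Local Notation le' := (connect (medge A')).
Local Notation T' := (TE A').

Let Wsupp' := Wsupp lamnz Hmix.
Let T'col' := T'col slt' lamnz Hmix.
Let U1' := U1 slt fa slt' lamnz Hmix.
Let U2' := U2 slt fa slt' lamnz Hmix.

Lemma sSk_sub k : s @: Sk B A k \subset rshift h k |: lshift n @: Lset B' A' k.
Proof.
apply/subsetP=> c' /imsetP[c]; rewrite inE => /eqP Sc ->.
have [[i' Hi]|[m Hi]] := colP (s c); rewrite Hi !inE.
  by apply/orP; right; apply: imset_f; rewrite inE; exact: U2' Sc Hi.
have sigm : sig s m = c by rewrite /sig -Hi permK.
have Tm y : (T' y m != 0) = (y \in upset A k) by rewrite T'col' sigm Sc.
have km : le k m by have := Tm m; rewrite TEd ?oner_eq0 // inE => /esym.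
have mk : le' m k by apply: TE_connect; rewrite Tm inE connect0.
apply/orP; left; rewrite eq_rshift; apply/eqP.
apply/val_inj/eqP; rewrite eqn_leq (sl_le slt' mk) (sl_le slt km).
by [].
Qed.

Lemma sig_Sk k : Scol B A (sig s k) = upset A k.
Proof.
have Heq : s @: Sk B A k = rshift h k |: lshift n @: Lset B' A' k.
  apply/eqP; rewrite eqEcard sSk_sub card_U1 card_imset; last exact: perm_inj.
  by rewrite (card_Sk slt fa) cardLL ltnSn.
have : rshift h k \in s @: Sk B A k by rewrite Heq !inE eqxx.
case/imsetP=> c; rewrite inE => /eqP Sc Hc.
by rewrite /sig Hc permK.
Qed.

Lemma U4 k y : (T' y k != 0) = le k y.
Proof. by rewrite T'col' sig_Sk inE. Qed.

Lemma U5 y l : A' y l != 0 -> le l y.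
Proof.
move: l; apply: (@measure_ind _ (fun l : 'I_n => (n - l)%N)
   (fun l => A' y l != 0 -> le l y)) => l IH Ayl.
have [Hy|Hy] := boolP (T' y l != 0); first by rewrite -U4.
have nyl : y != l.
  by apply: contraNneq Ayl => ->; apply/negPn/negP=> /slt'; rewrite ltnn.
move: Hy; rewrite negbK TE_rowE ?(negPf nyl) ?add0r; last exact: acycA slt'.
move/eqP=> Hs.
have Ht : A' y l * T' l l != 0 by rewrite TEd ?mulr1.
have [w nw] := sum_neq0_ex Ht Hs.
rewrite mulf_eq0 negb_or => /andP[Ayw Twl].
have lw : le l w by rewrite -U4.
have nw' : l != w by rewrite eq_sym.
have lw' : (l < w)%N := le_lt slt lw nw'.
exact: connect_trans lw (IH _ (ltn_sub2l (ltn_ord l) lw') Ayw).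
Qed.

Lemma U6 k j : le' k j -> le k j.
Proof.
move=> H; apply: (@connect_ind _ _ (fun u => le k u) k j _ (connect0 _ k) H).
move=> x y Hxy kx; apply: connect_trans kx (U5 Hxy).
Qed.

Lemma part1UR : ur_faithful B' A'.
Proof.
split.
  move=> k j dkj; rewrite teXE U4; apply: U6; exact: gdesc_connect dkj.
move=> i' j /existsP[l /andP[Bl lj]].
rewrite teHE.
set c := (s^-1)%g (lshift n i').
have Wc y : ((T' *m B') y i' != 0) = (y \in Scol B A c).
  by rewrite -Wsupp' /c permKV mixL.
have lin : l \in Scol B A c.
  apply: (@child_ind _ _ _ B' A' slt' (fun l => l \in Scol B A c) i' _ _ l Bl).
    by move=> l0; rewrite Wc.
  by move=> l0 l1 l1l0 H; apply: (Scol_up slt fa H (U6 l1l0)).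
by rewrite Wc; apply: (Scol_up slt fa lin (U6 lj)).
Qed.

End UR3.

Lemma perm_imset_eq (T : finType) (pi : {perm T}) (X Y : {set T}) :
  (forall i, (pi i \in Y) = (i \in X)) -> pi @: X = Y.
Proof.
move=> H; apply/setP=> y; apply/imsetP/idP => [[x Hx ->]|Hy]; first by rewrite H.
by exists ((pi^-1)%g y); rewrite -?H permKV.
Qed.

Section UR4.
Variables (R : fieldType) (h n : nat) (B B' : 'M[R]_(n, h)) (A A' : 'M[R]_n).
Hypotheses (slt : ur_sltri A) (fa : ur_faithful B A) (slt' : ur_sltri A') (fa' : ur_faithful B' A').
Variables (s : {perm 'I_(h + n)}) (lam : 'I_(h + n) -> R).
Hypotheses (lamnz : forall c, lam c != 0)
           (Hmix : forall r c, ur_mix B' A' r (s c) = lam c * ur_mix B A r c).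

Local Notation le := (connect (medge A)).
Local Notation le' := (connect (medge A')).

Definition lam' (c' : 'I_(h + n)) : R := (lam ((s^-1)%g c'))^-1.

Lemma lamnz' c : lam' c != 0.
Proof. by rewrite /lam' invr_eq0. Qed.

Lemma Hmix' r c : ur_mix B A r ((s^-1)%g c) = lam' c * ur_mix B' A' r c.
Proof. by have := Hmix r ((s^-1)%g c); rewrite permKV => ->; rewrite /lam' mulKf. Qed.

Lemma le_eq k y : le k y = le' k y.
Proof.
apply/idP/idP=> H.
  exact: TE_connect (U1 slt fa slt' lamnz Hmix H).
exact: TE_connect (U1 slt' fa' slt lamnz' Hmix' H).
Qed.

Lemma upset_eq k : upset A' k = upset A k.
Proof. by apply/setP=> y; rewrite !inE le_eq. Qed.

Lemma Scol_s c : Scol B' A' (s c) = Scol B A c.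
Proof. by apply/setP=> y; rewrite -(Wsupp lamnz Hmix) inE. Qed.

Definition pi0 (i' : 'I_h) : 'I_h :=
  match split ((s^-1)%g (lshift n i')) with
  | inl i => i
  | inr k => match split ((s^-1)%g (rshift h k)) with inl i => i | inr _ => i' end
  end.

Lemma splitL (i : 'I_h) : split (lshift n i) = inl i.
Proof. exact: (@unsplitK h n (inl i)). Qed.

Lemma splitR (k : 'I_n) : split (rshift h k) = inr k.
Proof. exact: (@unsplitK h n (inr k)). Qed.

Lemma pi0_spec i' :
  ((s^-1)%g (lshift n i') = lshift n (pi0 i')) \/
  (exists k, (s^-1)%g (lshift n i') = rshift h k /\
             (s^-1)%g (rshift h k) = lshift n (pi0 i') /\
             Scol B A (lshift n (pi0 i')) = upset A k).
Proof.
rewrite /pi0; have [[i Hi]|[k Hk]] := colP ((s^-1)%g (lshift n i')).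
  by left; rewrite Hi splitL.
right; exists k; rewrite Hk splitR.
have Sc2 : Scol B A ((s^-1)%g (rshift h k)) = upset A k.
  by rewrite -Scol_s permKV (ScolR slt' fa') upset_eq.
have [[i Hi]|[m Hm]] := colP ((s^-1)%g (rshift h k)).
  by rewrite Hi splitL; rewrite Hi in Sc2.
exfalso; rewrite Hm (ScolR slt fa) in Sc2.
have mk := upset_inj slt Sc2; subst m.
have := perm_inj (etrans Hm (esym Hk)) => /eqP; by rewrite eq_sym eq_lrshift.
Qed.

Lemma pi0_Scol i' : Scol B' A' (lshift n i') = Scol B A (lshift n (pi0 i')).
Proof.
have E : Scol B' A' (lshift n i') = Scol B A ((s^-1)%g (lshift n i')).
  by rewrite -Scol_s permKV.
have [H|[k [H1 [H2 H3]]]] := pi0_spec i'; rewrite E ?H //.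
by rewrite H1 (ScolR slt fa) H3.
Qed.

Lemma pi0_inj : injective pi0.
Proof.
move=> i1 i2 E.
have [H1|[k1 [H11 [H12 _]]]] := pi0_spec i1;
have [H2|[k2 [H21 [H22 _]]]] := pi0_spec i2.
- by apply: lshift_inj (perm_inj (etrans H1 (etrans (congr1 _ E) (esym H2)))).
- have := perm_inj (etrans H1 (etrans (congr1 _ E) (esym H22))) => /eqP.
  by rewrite eq_lrshift.
- have := perm_inj (etrans H12 (etrans (congr1 _ E) (esym H2))) => /eqP.
  by rewrite eq_sym eq_lrshift.
- have := perm_inj (etrans H12 (etrans (congr1 _ E) (esym H22))) => /rshift_inj ek.
  subst k2; apply: lshift_inj; apply: perm_inj (etrans H11 (esym H21)).
Qed.

Definition piP : {perm 'I_h} := perm pi0_inj.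

Lemma att_pi i' x : ur_attach B A (piP i') x = ur_attach B' A' i' x.
Proof.
by rewrite permE (attach_char slt fa) (attach_char slt' fa') pi0_Scol upset_eq.
Qed.

Lemma part2UR :
  [set ur_relabel piP @: S | S : {set ur_node h n} in ur_aog B' A'] = ur_aog B A.
Proof.
rewrite /ur_aog imsetU; congr (_ :|: _).
  rewrite -imset_comp; apply: eq_imset => x /=.
  rewrite imsetU1 /=; congr (_ |: _).
  have HL : piP @: [set i | ur_attach B' A' i x] = [set i | ur_attach B A i x].
    by apply: perm_imset_eq => i; rewrite !inE att_pi.
  by rewrite -HL -!imset_comp; apply: eq_imset.
have HU : piP @: [set i | [forall x, ~~ ur_attach B' A' i x]] =
          [set i | [forall x, ~~ ur_attach B A i x]].
  apply: perm_imset_eq => i; rewrite !inE; apply: eq_forallb => x; by rewrite att_pi.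
rewrite -HU -!imset_comp; apply: eq_imset => i /=; by rewrite imset_set1.
Qed.

End UR4.

End Dev.
Import Dev.

Theorem theorem2 :
  (forall (R : realFieldType) (p : nat) (Zs : {set 'I_p}) (C : 'M[R]_p),
     me_dag C -> me_faithful C ->
     [/\ (forall C' : 'M[R]_p, me_aog_class Zs C C' -> me_faithful C'),
         (forall C' : 'M[R]_p, me_dag C' -> me_mix_equiv Zs C C' -> me_faithful C' ->
            me_aog_class Zs C C') &
         (forall C' : 'M[R]_p, me_aog_class Zs C C' <->
            [/\ me_dag C', me_mix_equiv Zs C C' & me_faithful C'])])
  /\
  (forall (R : realFieldType) (h n : nat) (B : 'M[R]_(n, h)) (A : 'M[R]_n),
     ur_sltri A -> ur_faithful B A ->
     [/\ (forall (B' : 'M[R]_(n, h)) (A' : 'M[R]_n),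
            ur_aog_class B A B' A' -> ur_faithful B' A'),
         (forall (B' : 'M[R]_(n, h)) (A' : 'M[R]_n),
            ur_sltri A' -> ur_mix_equiv (ur_mix B A) (ur_mix B' A') ->
            ur_faithful B' A' -> ur_aog_class B A B' A') &
         (forall (B' : 'M[R]_(n, h)) (A' : 'M[R]_n),
            ur_aog_class B A B' A' <->
            [/\ ur_sltri A', ur_mix_equiv (ur_mix B A) (ur_mix B' A') &
                ur_faithful B' A'])]).
Proof.
split.
  move=> R p Zs C dag fa.
  have P1 : forall C', me_aog_class Zs C C' -> me_faithful C'.
    move=> C' [dag' [s [lam [sinj simg smix]]] Haog].
    exact: (part1 dag fa dag' sinj simg smix Haog).
  have P2 : forall C', me_dag C' -> me_mix_equiv Zs C C' -> me_faithful C' ->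
                       me_aog_class Zs C C'.
    move=> C' dag' mix fa'; split=> //.
    case: mix => s [lam [sinj simg smix]].
    exact: (part2 dag fa dag' fa' sinj simg smix).
  split=> // C'; split=> [H|[H1 H2 H3]]; last exact: P2.
  by have := P1 _ H; case: H.
move=> R h n B A slt fa.
have P1 : forall B' A', ur_aog_class B A B' A' -> ur_faithful B' A'.
  move=> B' A' [slt' [s [lam [lamnz Hmix]]] [pi Hpi]].
  exact: (part1UR slt fa slt' lamnz Hmix (cardL Hpi)).
have P2 : forall B' A', ur_sltri A' -> ur_mix_equiv (ur_mix B A) (ur_mix B' A') ->
            ur_faithful B' A' -> ur_aog_class B A B' A'.
  move=> B' A' slt' mix fa'; split=> //.
  case: mix => s [lam [lamnz Hmix]].
  by exists (piP slt fa slt' fa' lamnz Hmix); exact: part2UR.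
split=> // B' A'; split=> [H|[H1 H2 H3]]; last exact: P2.
by have := P1 _ _ H; case: H.
Qed.
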